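(* Let $n$ be an odd positive integer and let the parameter space be $\Theta=\{(\theta,\gamma_1,\dots,\gamma_n):\theta\in\{0,1\},\ \gamma_i\in[0,1]\ \forall i\}$. Conditionally on $(\theta,\boldsymbol\gamma)\in\Theta$, let $Y_1,\dots,Y_n\in\{0,1\}$ be independent with $\mathbb{P}(Y_i=1\mid\theta=1,\boldsymbol\gamma)=\mathbb{P}(Y_i=0\mid\theta=0,\boldsymbol\gamma)=\gamma_i$, and let $U\sim\mathrm{Bernoulli}(1/2)$ be independent of $\vec Y$. Decision rules are functions $\delta:\{0,1\}^n\times\{0,1\}\to\{0,1\}$ with loss $L(\theta,a)=\mathbb{I}(\theta\ne a)$ and risk $R(\delta,\xi)=\mathbb{E}[L(\theta,\delta(\vec Y,U))\mid\xi]$ for $\xi=(\theta,\boldsymbol\gamma)\in\Theta$. Then the coin flip rule $\delta^{cf}(\vec y,u)=u$ is minimax: $\sup_{\xi\in\Theta}R(\delta^{cf},\xi)=\inf_\delta\sup_{\xi\in\Theta}R(\delta,\xi)$. *)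

(* Defs.v *)
From HB Require Import structures.
From mathcomp Require Import all_boot all_order all_algebra.
From mathcomp Require Import boolp classical_sets reals.
Set Implicit Arguments. Unset Strict Implicit. Unset Printing Implicit Defensive.
Import Order.TTheory GRing.Theory Num.Theory.
Local Open Scope ring_scope.
Local Open Scope classical_set_scope.

Definition obs (n : nat) := {ffun 'I_n -> bool}.

Definition rule (n : nat) := obs n -> bool -> bool.

Definition in_Theta (R : realType) (n : nat) (gamma : 'I_n -> R) : Prop :=
  forall i, 0 <= gamma i <= 1.

Definition pY (R : realType) (theta yi : bool) (g : R) : R :=
  if yi == theta then g else 1 - g.

Definition pYvec (R : realType) (n : nat) (theta : bool) (gamma : 'I_n -> R)
  (y : obs n) : R := \prod_(i < n) pY theta (y i) (gamma i).

(* Risk R(delta, xi) = E[ I(theta <> delta(Y,U)) | xi ], U ~ Bernoulli(1/2) indep. of Y. *)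
Definition risk (R : realType) (n : nat) (delta : rule n) (theta : bool)
  (gamma : 'I_n -> R) : R :=
  \sum_(y : obs n) \sum_(u : bool)
     pYvec theta gamma y * (1 / 2) * (if theta != delta y u then 1 else 0).

Definition max_risk (R : realType) (n : nat) (delta : rule n) : R :=
  sup [set r : R | exists theta gamma, in_Theta gamma /\ r = risk delta theta gamma].

Definition coin_flip (n : nat) : rule n := fun _ u => u.

(* Main.v *)
Require Import Defs.
From HB Require Import structures.
From mathcomp Require Import all_boot all_order all_algebra.
From mathcomp Require Import boolp classical_sets reals.
Import Order.TTheory GRing.Theory Num.Theory.
Local Open Scope ring_scope.
Local Open Scope classical_set_scope.

Lemma sum_pYvec (R : realType) (n : nat) theta (gamma : 'I_n -> R) :
  \sum_(y : obs n) pYvec theta gamma y = 1.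
Proof.
rewrite /pYvec /obs.
rewrite -(bigA_distr_bigA (fun i b => pY theta b (gamma i))) /=.
apply: big1 => i _.
rewrite big_bool /= /pY.
case: theta => /=; [by rewrite addrC subrK | by rewrite subrK].
Qed.

Lemma pYvec_ge0 (R : realType) (n : nat) theta (gamma : 'I_n -> R) y :
  in_Theta gamma -> 0 <= pYvec theta gamma y.
Proof.
move=> hg; apply: prodr_ge0 => i _; rewrite /pY.
have /andP[h0 h1] := hg i.
by case: eqP => _ //; rewrite subr_ge0.
Qed.

Lemma risk_le1 (R : realType) (n : nat) (d : rule n) theta (gamma : 'I_n -> R) :
  in_Theta gamma -> risk d theta gamma <= 1.
Proof.
move=> hg; rewrite /risk.
apply: (@le_trans _ _ (\sum_y pYvec theta gamma y)); last by rewrite (@sum_pYvec R n theta gamma).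
have h2 : 0 <= 1/2 :> R by rewrite divr_ge0 ?ler01 ?ler0n.
apply: ler_sum => y _.
rewrite big_bool /=.
have h := @pYvec_ge0 R n theta gamma y hg.
apply: (@le_trans _ _ (pYvec theta gamma y * (1/2) + pYvec theta gamma y * (1/2))).
  by apply: lerD; case: ifP => _; rewrite ?mulr1 ?mulr0 // mulr_ge0.
by rewrite -mulrDr -splitr mulr1.
Qed.

Lemma risk_cf (R : realType) (n : nat) theta (gamma : 'I_n -> R) :
  risk (@coin_flip n) theta gamma = 1/2.
Proof.
rewrite /risk /coin_flip.
rewrite (eq_bigr (fun y => pYvec theta gamma y * (1/2))).
  by rewrite -mulr_suml (@sum_pYvec R n) mul1r.
move=> y _; rewrite big_bool /=.
by case: theta => /=; rewrite ?mulr1 ?mulr0 ?addr0 ?add0r.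
Qed.

Lemma risk_half (R : realType) (n : nat) (d : rule n) :
  risk d false (fun _ : 'I_n => (1/2 : R)) + risk d true (fun _ => 1/2) = 1.
Proof.
have e : forall th y, pYvec th (fun _ : 'I_n => (1/2 : R)) y =
                      pYvec false (fun _ => 1/2) y.
  move=> th y; apply: eq_bigr => i _; rewrite /pY.
  have h : 1 - 1/2 = 1/2 :> R by rewrite {1}(splitr 1) addrK.
  by case: eqP; case: eqP; rewrite ?h.
rewrite /risk -big_split /=.
transitivity (\sum_(y : obs n) pYvec false (fun _ : 'I_n => (1/2 : R)) y); last exact: sum_pYvec.
apply: eq_bigr => y _; rewrite -big_split /= (e true).
rewrite big_bool /=.
set p := pYvec _ _ y.
by case: (d y true); case: (d y false) => /=;
  rewrite ?mulr1 ?mulr0 ?addr0 ?add0r -mulrDr -splitr mulr1.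
Qed.

Theorem theorem7 (R : realType) (n : nat) (hn : odd n) :
  @max_risk R n (@coin_flip n) =
  inf [set s : R | exists delta : rule n, s = @max_risk R n delta].
Proof.
have cfE : @max_risk R n (@coin_flip n) = 1/2.
  rewrite /max_risk.
  have -> : [set r : R | exists theta gamma, in_Theta gamma /\
      r = risk (@coin_flip n) theta gamma] = [set 1/2].
    apply/seteqP; split => r /=.
      by move=> [th [g [_ ->]]]; rewrite risk_cf.
    move=> ->; exists false, (fun _ => 0); split; last by rewrite risk_cf.
    by move=> i; rewrite lexx ler01.
  by rewrite sup1.
have ge : forall d : rule n, 1/2 <= @max_risk R n d.
  move=> d.
  have hs : has_sup [set r : R | exists theta gamma, in_Theta gamma /\
      r = risk d theta gamma].
    split.
      by exists (risk d false (fun _ : 'I_n => 0)), false, (fun _ => 0);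
        split => // i; rewrite lexx ler01.
    by exists 1 => r [th [g [hg ->]]]; exact: (@risk_le1 R n d th g hg).
  have hT : in_Theta (fun _ : 'I_n => (1/2 : R)).
    by move=> i; rewrite divr_ge0 ?ler01 // ler_pdivrMr // mul1r ler1n.
  have ub := sup_upper_bound hs.
  have u0 : risk d false (fun _ => 1/2) <= max_risk R d.
    by apply: ub; exists false, (fun _ => 1/2).
  have u1 : risk d true (fun _ => 1/2) <= max_risk R d.
    by apply: ub; exists true, (fun _ => 1/2).
  have := @risk_half R n d; move: u0 u1.
  set a := risk d false _; set b := risk d true _; set m := max_risk R d.
  move=> u0 u1 hab.
  have : 1 <= m + m by rewrite -hab lerD.
  by move=> h; rewrite ler_pdivrMr // mulr_natr mulr2n.
rewrite cfE; apply/eqP; rewrite eq_le; apply/andP; split.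
  apply: lb_le_inf; first by exists (max_risk R (@coin_flip n)), (@coin_flip n).
  by move=> s [d ->]; apply: ge.
rewrite -cfE; apply: ge_inf; last by exists (@coin_flip n).
by exists (1/2) => s [d ->]; apply: ge.
Qed.
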